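(* There exist symmetric matrices $C,A_1,\dots,A_m\in\mathbb{S}^n$, $b\in\mathbb{R}^m$ and a nonzero $S\in\mathbb{S}^n_+$ with $C\cdot S=0$ and $A_i\cdot S=0$ for all $i$ such that: the pair (P-SDP): maximize $b^Ty$ s.t. $C-\sum_iy_iA_i\in\mathbb{S}^n_+$, and (D-SDP): minimize $C\cdot X$ s.t. $A_i\cdot X=b_i$, $X\in\mathbb{S}^n_+$, both attain their optimal values and these values are equal; the reduced pair (R/P): maximize $b^Ty$ s.t. $C-\sum_iy_iA_i\in\mathcal{F}$, and (R/D): minimize $C\cdot X$ s.t. $A_i\cdot X=b_i$, $X\in\mathcal{F}^*$, where $\mathcal{F}=\mathbb{S}^n_+\cap S^{\perp}$, both attain their optimal values and these values are equal; and yet there is an optimal solution $X$ of (R/D) for which no $\alpha\in\mathbb{R}$ satisfies $X+\alpha S\in\mathbb{S}^n_+$ (so the dual recovery procedure fails on $X$).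
   Context: $\mathbb{S}^n$ denotes real symmetric $n\times n$ matrices with trace inner product $A\cdot B=\operatorname{trace}(AB)$, $\mathbb{S}^n_+$ the positive semidefinite cone, $S^{\perp}=\{X:S\cdot X=0\}$, and $\mathcal{F}^*=\{Y\in\mathbb{S}^n: Y\cdot X\ge0\ \forall X\in\mathcal{F}\}$. The dual recovery procedure (for one reducing certificate $S$) takes an optimal solution $X$ of (R/D) and seeks $\alpha$ with $X+\alpha S\in\mathbb{S}^n_+$, failing if none exists. *)

(* Defs.v *)
From HB Require Import structures.
From mathcomp Require Import all_boot all_order all_algebra.
Set Implicit Arguments. Unset Strict Implicit. Unset Printing Implicit Defensive.
Import Order.TTheory GRing.Theory Num.Theory.
Local Open Scope ring_scope.

Section SDP.
Variables (R : rcfType) (n m : nat).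

Definition symm (X : 'M[R]_n) : Prop := X^T = X.

Definition psd (X : 'M[R]_n) : Prop :=
  symm X /\ forall x : 'cV[R]_n, 0 <= (x^T *m X *m x) 0 0.

Definition dotm (A B : 'M[R]_n) : R := \tr (A *m B).

Definition faceF (S X : 'M[R]_n) : Prop := psd X /\ dotm S X = 0.

Definition dualF (S Y : 'M[R]_n) : Prop :=
  symm Y /\ forall X, faceF S X -> 0 <= dotm Y X.

Definition bty (b y : 'I_m -> R) : R := \sum_(i < m) b i * y i.

Definition slack (C : 'M[R]_n) (A : 'I_m -> 'M[R]_n) (y : 'I_m -> R) :
  'M[R]_n := C - \sum_(i < m) y i *: A i.

Definition pfeas (K : 'M[R]_n -> Prop) C A (y : 'I_m -> R) : Prop :=
  K (slack C A y).

Definition dfeas (K : 'M[R]_n -> Prop) (A : 'I_m -> 'M[R]_n) (b : 'I_m -> R)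
  (X : 'M[R]_n) : Prop := (forall i, dotm (A i) X = b i) /\ K X.

Definition popt K C A b (y : 'I_m -> R) : Prop :=
  pfeas K C A y /\ forall y', pfeas K C A y' -> bty b y' <= bty b y.

Definition dopt K (C : 'M[R]_n) A b (X : 'M[R]_n) : Prop :=
  dfeas K A b X /\ forall X', dfeas K A b X' -> dotm C X <= dotm C X'.

Definition attained_no_gap KP KD C A b : Prop :=
  exists y X, popt KP C A b y /\ dopt KD C A b X /\ bty b y = dotm C X.

End SDP.

(* Main.v *)
Require Import Defs.
From HB Require Import structures.
From mathcomp Require Import all_boot all_order all_algebra ring lra.
Import Order.TTheory GRing.Theory Num.Theory.
Local Open Scope ring_scope.
Section S.
Variable R : rcfType.
Implicit Types (a b c d : R).
Definition mk2 (a b c d : R) : 'M[R]_2 :=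
  \matrix_(i < 2, j < 2) if i == ord0 then (if j == ord0 then a else b) else (if j == ord0 then c else d).
Definition v2 (a b : R) : 'cV[R]_2 := \col_(i < 2) if i == ord0 then a else b.
Lemma w0 : widen_ord (m:=2) (leqnSn 1) ord_max = ord0.
Proof. by apply/val_inj. Qed.
Lemma quad2 (M : 'M[R]_2) (x : 'cV[R]_2) :
  (x^T *m M *m x) 0 0 = x ord0 0 * (x ord0 0 * M ord0 ord0 + x ord_max 0 * M ord_max ord0) + x ord_max 0 * (x ord0 0 * M ord0 ord_max + x ord_max 0 * M ord_max ord_max).
Proof.
rewrite !mxE !big_ord_recr !big_ord0 /= !add0r !mxE !big_ord_recr !big_ord0 /= !add0r !mxE /= !w0.
have -> : (0 : 'I_1) = ord0 by apply/val_inj. ring.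
Qed.
Lemma tr2 (A B : 'M[R]_2) : dotm A B = A ord0 ord0 * B ord0 ord0 + A ord0 ord_max * B ord_max ord0
  + (A ord_max ord0 * B ord0 ord_max + A ord_max ord_max * B ord_max ord_max).
Proof.
rewrite /dotm /mxtrace !big_ord_recr !big_ord0 /= !add0r !mxE !big_ord_recr !big_ord0 /= !add0r !w0. ring.
Qed.
Lemma mk2E a b c d : (mk2 a b c d) ord0 ord0 = a /\ (mk2 a b c d) ord0 ord_max = b /\ (mk2 a b c d) ord_max ord0 = c /\ (mk2 a b c d) ord_max ord_max = d.
Proof. by rewrite !mxE. Qed.
Lemma v2E a b : v2 a b ord0 0 = a /\ v2 a b ord_max 0 = b.
Proof. by rewrite !mxE. Qed.
Lemma ord2P (i : 'I_2) : i = ord0 \/ i = ord_max.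
Proof. case: i => [[|[|k]]] Hi; [left|right|by []]; exact/val_inj. Qed.
Lemma symm_mk2 a b d : symm (mk2 a b b d).
Proof.
apply/matrixP => i j; rewrite !mxE.
by case: (ord2P i) => ->; case: (ord2P j) => ->.
Qed.
Lemma psd0 : psd (0 : 'M[R]_2).
Proof. split; first by rewrite /symm trmx0. by move=> x; rewrite mulmx0 mul0mx mxE. Qed.
Lemma dot0 (X : 'M[R]_2) : dotm 0 X = 0.
Proof. by rewrite /dotm mul0mx mxtrace0. Qed.
Lemma dot0r (X : 'M[R]_2) : dotm X 0 = 0.
Proof. by rewrite /dotm mulmx0 mxtrace0. Qed.
End S.

Theorem corollary4 (R : rcfType) :
  exists (n m : nat) (C : 'M[R]_n) (A : 'I_m -> 'M[R]_n) (b : 'I_m -> R)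
         (S : 'M[R]_n),
    symm C /\ (forall i, symm (A i)) /\
    psd S /\ S != 0 /\ dotm C S = 0 /\ (forall i, dotm (A i) S = 0) /\
    attained_no_gap (@psd R n) (@psd R n) C A b /\
    attained_no_gap (faceF S) (dualF S) C A b /\
    exists X : 'M[R]_n,
      dopt (dualF S) C A b X /\ ~ (exists alpha : R, psd (X + alpha *: S)).
Proof.
pose S := @mk2 R (1:R) 0 0 0.
pose X := @mk2 R (0:R) 1 1 0.
have Hs : forall (y : 'I_0 -> R), slack 0 (fun _ => 0) y = 0 :> 'M[R]_2.
  by move=> y; rewrite /slack big_ord0 subr0.
have Hb : forall (y : 'I_0 -> R), bty (fun _ => 0) y = 0.
  by move=> y; rewrite /bty big_ord0.
have HdS : dualF S X.
  split; first exact: symm_mk2.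
  move=> Y [[sY pY] dY].
  have e := congr1 (fun M : 'M[R]_2 => M ord0 ord_max) (sY : Y^T = Y); rewrite /= mxE in e.
  move: dY; rewrite tr2 tr2 /X /S.
  case: (@mk2E R (1:R) 0 0 0) => -> [-> [-> ->]].
  case: (@mk2E R (0:R) 1 1 0) => -> [-> [-> ->]].
  move=> dY.
  have := pY (v2 R (Y ord_max ord_max + 1) (- (2 * Y ord0 ord_max))).
  rewrite quad2; case: (@v2E R (Y ord_max ord_max + 1) (- (2 * Y ord0 ord_max))) => -> ->.
  rewrite e => h.
  have h0 : Y ord0 ord0 = 0 by lra.
  rewrite h0 in h.
  nra.
exists 2%N, 0%N, 0, (fun _ => 0), (fun _ => 0), S.
split; first by rewrite /symm trmx0.
split; first by move=> i; rewrite /symm trmx0.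
split.
  split; first exact: symm_mk2.
  move=> x; rewrite quad2 /S; case: (@mk2E R (1:R) 0 0 0) => -> [-> [-> ->]].
  nra.
split.
  apply/eqP => /matrixP /(_ ord0 ord0); rewrite !mxE /=. by move/eqP; rewrite oner_eq0.
split; first exact: dot0.
split; first by move=> i; exact: dot0.
split.
  exists (fun _ => 0), 0; split; [|split].
  - split; first by rewrite /pfeas Hs; exact: psd0.
    by move=> y' _; rewrite !Hb.
  - split; first by split; [case|exact: psd0].
    by move=> X' _; rewrite !dot0.
  - by rewrite Hb dot0.
split.
  exists (fun _ => 0), 0; split; [|split].
  - split; first by rewrite /pfeas Hs; split; [exact: psd0|exact: dot0r].
    by move=> y' _; rewrite !Hb.
  - split.
    + split; first by case.
      split; first by rewrite /symm trmx0.
      by move=> Y _; rewrite dot0.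
    + by move=> X' _; rewrite !dot0.
  - by rewrite Hb dot0.
exists X; split.
  split; first by split; [case|exact: HdS].
  by move=> X' _; rewrite !dot0.
case=> alpha [_ p].
have := p (v2 R 2 (- alpha - 1)).
rewrite quad2; case: (@v2E R (2:R) (- alpha - 1)) => -> ->.
rewrite !mxE /=.
lra.
Qed.
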